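(* Let $G=(V,E,\omega)\in\mathcal G$ and let $S$ be a proper subset of $V$. Let $\nu^S$ be the equilibrium measure for $S$, $\kappa_S$ the graph curvature of $S$, and $\kappa_S^+=\max_{i\in V}(\kappa_S)_i$. Then $\nu^S_i\geq(\kappa_S^+)^{-1}$ for all $i\in S$.
   Context: $\mathcal{G}$ is the set of finite, simple, connected, undirected, edge-weighted graphs $G=(V,E,\omega)$ with $V=\{1,\dots,n\}$, $n\geq2$, weights $\omega_{ij}=\omega_{ji}>0$ on edges, $0$ otherwise. $d_i=\sum_j\omega_{ij}$. $\mathcal V$: functions $V\to\mathbb R$. Fixed $r\in[0,1]$; $(\Delta u)_i=d_i^{-r}\sum_j\omega_{ij}(u_i-u_j)$. For a proper subset $S\subsetneq V$, the equilibrium measure $\nu^S$ is the unique $\nu\in\mathcal V$ with $(\Delta\nu)_i=1$ for $i\in S$ and $\nu_i=0$ for $i\in V\setminus S$. Graph curvature (with $q=1$): $(\kappa_S)_i=d_i^{-r}\sum_{j\in V\setminus S}\omega_{ij}$ if $i\in S$, and $(\kappa_S)_i=-d_i^{-r}\sum_{j\in S}\omega_{ij}$ if $i\in V\setminus S$. *)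

(* Defs.v *)
From HB Require Import structures.
From mathcomp Require Import all_boot all_order all_algebra.
From mathcomp Require Import reals exp.
Set Implicit Arguments. Unset Strict Implicit. Unset Printing Implicit Defensive.
Import Order.TTheory GRing.Theory Num.Theory.
Local Open Scope ring_scope.

Section GraphDefs.
Variables (R : realType) (n : nat).

(* A graph in the class G on vertex set 'I_n (= {1,...,n} shifted to {0,...,n-1}):
   symmetric nonnegative weights, no loops, connected via edges (w i j > 0). *)
Definition edge (w : 'I_n -> 'I_n -> R) : rel 'I_n := fun i j => 0 < w i j.

Definition is_wgraph (w : 'I_n -> 'I_n -> R) : Prop :=
  [/\ (2 <= n)%N,
      forall i j, w i j = w j i,
      forall i j, 0 <= w i j,
      forall i, w i i = 0
    & forall i j, connect (edge w) i j].

Definition deg (w : 'I_n -> 'I_n -> R) (i : 'I_n) : R := \sum_j w i j.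

Definition lap (r : R) (w : 'I_n -> 'I_n -> R) (u : 'I_n -> R) (i : 'I_n) : R :=
  (deg w i) `^ (- r) * \sum_j w i j * (u i - u j).

Definition is_equilibrium (r : R) (w : 'I_n -> 'I_n -> R) (S : {set 'I_n})
  (nu : 'I_n -> R) : Prop :=
  (forall i, i \in S -> lap r w nu i = 1) /\ (forall i, i \notin S -> nu i = 0).

(* graph curvature kappa_S (q = 1) *)
Definition curv (r : R) (w : 'I_n -> 'I_n -> R) (S : {set 'I_n}) (i : 'I_n) : R :=
  if i \in S then (deg w i) `^ (- r) * \sum_(j in ~: S) w i j
  else - ((deg w i) `^ (- r) * \sum_(j in S) w i j).

(* kappa_S^+ = max_i (kappa_S)_i.  The seed 0 is harmless: curv is >= 0 on S and
   identically 0 when S is empty, so the maximum is always >= 0. *)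
Definition curv_max (r : R) (w : 'I_n -> 'I_n -> R) (S : {set 'I_n}) : R :=
  \big[Num.max/0]_(i < n) curv r w S i.

End GraphDefs.

(* Main.v *)
Require Import Defs.
From HB Require Import structures.
From mathcomp Require Import all_boot all_order all_algebra.
From mathcomp Require Import reals exp.
Import Order.TTheory GRing.Theory Num.Theory.
Local Open Scope ring_scope.

Theorem lemma3p8 (R : realType) (n : nat) (w : 'I_n -> 'I_n -> R) (r : R)
  (S : {set 'I_n}) (nu : 'I_n -> R) :
  is_wgraph w -> 0 <= r <= 1 -> S \proper [set: 'I_n] ->
  is_equilibrium r w S nu ->
  forall i, i \in S -> (curv_max r w S)^-1 <= nu i.
Proof.
move=> [_ _ w0 _ _] _ _ [lapS nuS] i iS.
case: (Order.TotalTheory.arg_minP nu iS) => k kS0 kmin.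
have kS : k \in S := kS0.
set D := (deg w k) `^ (- r).
set C := \sum_(j in ~: S) w k j.
have D0 : 0 <= D by apply: powR_ge0.
have C0 : 0 <= C by apply: sumr_ge0 => j _.
have ck : curv r w S k = D * C by rewrite /curv kS.
have key : 1 <= nu k * (D * C).
  rewrite -(lapS k kS) /lap -/D mulrCA ler_wpM2l //.
  rewrite (bigID (fun j => j \in S)) /= -[X in _ <= X]add0r lerD //.
    rewrite big_mkcond sumr_le0 // => j _; case: ifP => // jS.
    by rewrite mulr_ge0_le0 // subr_le0 kmin.
  rewrite /C big_distrr /= [in X in _ <= X]big_mkcond [in X in X <= _]big_mkcond.
  apply: ler_sum => j _; rewrite in_setC; case: ifP => // jS.
  by rewrite (nuS j jS) subr0 mulrC.
have DC0 : 0 < D * C.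
  rewrite lt_def mulr_ge0 // andbT; apply/eqP => e.
  by move: key; rewrite e mulr0 ler10.
have nk0 : 0 < nu k.
  by rewrite -(pmulr_lgt0 _ DC0) (lt_le_trans ltr01 key).
have hmax : D * C <= curv_max r w S by rewrite -ck /curv_max le_bigmax.
have hk : (D * C)^-1 <= nu k by rewrite -div1r ler_pdivrMr // mulrC.
have cm0 : 0 < curv_max r w S by exact: lt_le_trans DC0 hmax.
have hm : (curv_max r w S)^-1 <= (D * C)^-1 by rewrite lef_pV2 ?posrE.
exact: le_trans hm (le_trans hk (kmin i iS)).
Qed.
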